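(* For every finite multiset of formulas $\Gamma$ and every formula $\varphi$: the sequent $\Gamma\Rightarrow\varphi$ is derivable in $\mathbf{G3N}$ (resp. $\mathbf{G3NeF}$, $\mathbf{G3CoPC}$, $\mathbf{G3MPC}$) if and only if the equation $\bigwedge\Gamma\to\varphi\approx 1$ is valid in the variety of N-algebras (resp. NeF-algebras, CoPC-algebras, contrapositionally complemented lattices).
   Context: Formulas are generated from a countable set of propositional variables $p,q,\dots$ and the constant $\top$ by the grammar $\varphi::= p\mid\top\mid\varphi\wedge\varphi\mid\varphi\vee\varphi\mid\varphi\to\varphi\mid\neg\varphi$ (there is no constant $\bot$). $\varphi\leftrightarrow\psi$ abbreviates $(\varphi\to\psi)\wedge(\psi\to\varphi)$. A sequent is an expression $\Gamma\Rightarrow\varphi$ where $\Gamma$ is a finite multiset of formulas and $\varphi$ is a formula (the goal); $\Gamma,\Delta$ denotes multiset union and $\Gamma,\alpha$ denotes $\Gamma$ with one more occurrence of $\alpha$. Rules ($p$ a propositional variable): (ax) $\Gamma,p\Rightarrow p$ (no premises); ($\top$) $\Gamma\Rightarrow\top$ (no premises); ($\to$r) from $\Gamma,\alpha\Rightarrow\beta$ infer $\Gamma\Rightarrow\alpha\to\beta$; ($\to$l) from $\Gamma,\alpha\to\beta\Rightarrow\alpha$ and $\Gamma,\beta\Rightarrow\varphi$ infer $\Gamma,\alpha\to\beta\Rightarrow\varphi$; ($\wedge$r) from $\Gamma\Rightarrow\alpha$ and $\Gamma\Rightarrow\beta$ infer $\Gamma\Rightarrow\alpha\wedge\beta$; ($\wedge$l)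 from $\Gamma,\alpha,\beta\Rightarrow\varphi$ infer $\Gamma,\alpha\wedge\beta\Rightarrow\varphi$; ($\vee$r$_1$), ($\vee$r$_2$) from $\Gamma\Rightarrow\alpha$ (resp. $\Gamma\Rightarrow\beta$) infer $\Gamma\Rightarrow\alpha\vee\beta$; ($\vee$l) from $\Gamma,\alpha\Rightarrow\varphi$ and $\Gamma,\beta\Rightarrow\varphi$ infer $\Gamma,\alpha\vee\beta\Rightarrow\varphi$; (n) from $\Gamma,\neg\alpha,\beta\Rightarrow\alpha$ and $\Gamma,\neg\alpha,\alpha\Rightarrow\beta$ infer $\Gamma,\neg\alpha\Rightarrow\neg\beta$; (nef) from $\Gamma,\neg\alpha\Rightarrow\alpha$ infer $\Gamma,\neg\alpha\Rightarrow\neg\beta$; (copc) from $\Gamma,\neg\alpha,\beta\Rightarrow\alpha$ infer $\Gamma,\neg\alpha\Rightarrow\neg\beta$; (an) from $\Gamma,\alpha\Rightarrow\neg\alpha$ infer $\Gamma\Rightarrow\neg\alpha$. The rules (ax) through ($\vee$l) are the positive rules. The four systems are: $\mathbf{G3N}$ = positive rules + (n); $\mathbf{G3NeF}$ = positive rules + (n) + (nef); $\mathbf{G3CoPC}$ = positive rules + (copc); $\mathbf{G3MPC}$ = positive rules + (copc) + (an). None of them contains weakening, contraction or cut as a rule. A derivation is a finite tree of rule instances with leaves instances of (ax) or ($\top$); its height is the number of inference steps on a longest branch. A sequent is derivable if it has a derivation; a formula $\varphi$ is a theorem if $\Rightarrow\varphi$ (empty antecedent) is derivable. Algebraic semantics: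 a relatively pseudo-complemented lattice (Brouwerian algebra) is an algebra $\langle A,\wedge,\vee,\to,1\rangle$ that is a lattice with top element $1$ such that $c\le a\to b$ iff $c\wedge a\le b$ for all $a,b,c$. An N-algebra is an algebra $\langle A,\wedge,\vee,\to,1,\neg\rangle$ whose reduct $\langle A,\wedge,\vee,\to,1\rangle$ is a relatively pseudo-complemented lattice and whose unary operation satisfies $(p\leftrightarrow q)\to(\neg p\leftrightarrow\neg q)\approx 1$. NeF-algebras are N-algebras satisfying $(p\wedge\neg p)\to\neg q\approx1$; CoPC-algebras are N-algebras satisfying $(p\to q)\to(\neg q\to\neg p)\approx 1$; contrapositionally complemented lattices are CoPC-algebras satisfying moreover $(p\to\neg p)\to\neg p\approx 1$. Formulas are interpreted as terms, with $\top$ interpreted as $1$; $\bigwedge\Gamma$ is the conjunction of the formulas in $\Gamma$ (equal to $\top$ if $\Gamma$ is empty). An equation is valid in a variety if it holds under every assignment of the variables in every algebra of the variety. *)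

(* Defs.v *)
From Stdlib Require Import List Permutation.
Import ListNotations.

Inductive formula : Type :=
| Var : nat -> formula
| Top : formula
| And : formula -> formula -> formula
| Or  : formula -> formula -> formula
| Imp : formula -> formula -> formula
| Neg : formula -> formula.

Definition Iff (a b : formula) : formula := And (Imp a b) (Imp b a).

Fixpoint bigAnd (G : list formula) : formula :=
  match G with
  | [] => Top
  | [a] => a
  | a :: G' => And a (bigAnd G')
  end.

Inductive system : Type := G3N | G3NeF | G3CoPC | G3MPC.

Definition has_n (s : system) : bool :=
  match s with G3N | G3NeF => true | _ => false end.
Definition has_nef (s : system) : bool :=
  match s with G3NeF => true | _ => false end.
Definition has_copc (s : system) : bool :=
  match s with G3CoPC | G3MPC => true | _ => false end.
Definition has_an (s : system) : bool :=
  match s with G3MPC => true | _ => false end.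

(** Antecedents are finite multisets, represented by lists; a conclusion
    antecedent "Gamma, alpha" is any list that is a permutation of
    [alpha :: Gamma]. *)
Inductive deriv (s : system) : list formula -> formula -> Prop :=
| d_ax : forall G D p, Permutation D (Var p :: G) -> deriv s D (Var p)
| d_top : forall G, deriv s G Top
| d_impr : forall G a b, deriv s (a :: G) b -> deriv s G (Imp a b)
| d_impl : forall G D a b phi, Permutation D (Imp a b :: G) ->
    deriv s (Imp a b :: G) a -> deriv s (b :: G) phi -> deriv s D phi
| d_andr : forall G a b, deriv s G a -> deriv s G b -> deriv s G (And a b)
| d_andl : forall G D a b phi, Permutation D (And a b :: G) ->
    deriv s (a :: b :: G) phi -> deriv s D phi
| d_orr1 : forall G a b, deriv s G a -> deriv s G (Or a b)
| d_orr2 : forall G a b, deriv s G b -> deriv s G (Or a b)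
| d_orl : forall G D a b phi, Permutation D (Or a b :: G) ->
    deriv s (a :: G) phi -> deriv s (b :: G) phi -> deriv s D phi
| d_n : forall G D a b, has_n s = true -> Permutation D (Neg a :: G) ->
    deriv s (Neg a :: b :: G) a -> deriv s (Neg a :: a :: G) b ->
    deriv s D (Neg b)
| d_nef : forall G D a b, has_nef s = true -> Permutation D (Neg a :: G) ->
    deriv s (Neg a :: G) a -> deriv s D (Neg b)
| d_copc : forall G D a b, has_copc s = true -> Permutation D (Neg a :: G) ->
    deriv s (Neg a :: b :: G) a -> deriv s D (Neg b)
| d_an : forall G a, has_an s = true ->
    deriv s (a :: G) (Neg a) -> deriv s G (Neg a).

Record algebra := {
  carrier :> Type;
  ameet : carrier -> carrier -> carrier;
  ajoin : carrier -> carrier -> carrier;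
  aimp  : carrier -> carrier -> carrier;
  atop  : carrier;
  aneg  : carrier -> carrier
}.

Definition ale (A : algebra) (x y : A) : Prop := ameet A x y = x.

Definition is_rpc_lattice (A : algebra) : Prop :=
  (forall x y, ameet A x y = ameet A y x) /\
  (forall x y, ajoin A x y = ajoin A y x) /\
  (forall x y z, ameet A x (ameet A y z) = ameet A (ameet A x y) z) /\
  (forall x y z, ajoin A x (ajoin A y z) = ajoin A (ajoin A x y) z) /\
  (forall x y, ameet A x (ajoin A x y) = x) /\
  (forall x y, ajoin A x (ameet A x y) = x) /\
  (forall x, ale A x (atop A)) /\
  (forall a b c, ale A c (aimp A a b) <-> ale A (ameet A c a) b).

Definition aiff (A : algebra) (x y : A) : A :=
  ameet A (aimp A x y) (aimp A y x).

Definition is_N_algebra (A : algebra) : Prop :=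
  is_rpc_lattice A /\
  forall p q, aimp A (aiff A p q) (aiff A (aneg A p) (aneg A q)) = atop A.

Definition is_NeF_algebra (A : algebra) : Prop :=
  is_N_algebra A /\
  forall p q, aimp A (ameet A p (aneg A p)) (aneg A q) = atop A.

Definition is_CoPC_algebra (A : algebra) : Prop :=
  is_N_algebra A /\
  forall p q, aimp A (aimp A p q) (aimp A (aneg A q) (aneg A p)) = atop A.

Definition is_CC_lattice (A : algebra) : Prop :=
  is_CoPC_algebra A /\
  forall p, aimp A (aimp A p (aneg A p)) (aneg A p) = atop A.

Definition in_variety (s : system) (A : algebra) : Prop :=
  match s with
  | G3N => is_N_algebra A
  | G3NeF => is_NeF_algebra A
  | G3CoPC => is_CoPC_algebra A
  | G3MPC => is_CC_lattice A
  end.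

Fixpoint eval (A : algebra) (v : nat -> A) (f : formula) : A :=
  match f with
  | Var p => v p
  | Top => atop A
  | And a b => ameet A (eval A v a) (eval A v b)
  | Or a b => ajoin A (eval A v a) (eval A v b)
  | Imp a b => aimp A (eval A v a) (eval A v b)
  | Neg a => aneg A (eval A v a)
  end.

Definition valid_eq1 (s : system) (f : formula) : Prop :=
  forall (A : algebra), in_variety s A -> forall v : nat -> A, eval A v f = atop A.

(* Main.v *)
Require Import Defs.
From Stdlib Require Import List Permutation Lia Arith.
Import ListNotations.

Lemma feq_dec : forall x y : formula, {x = y} + {x <> y}.
Proof. decide equality; apply Nat.eq_dec. Qed.

Ltac perm :=
  solve [ apply (Permutation_count_occ feq_dec); let z := fresh "z" in intro z;
  repeat (match goal with H : Permutation _ _ |- _ =>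
     let H' := fresh in pose proof ((proj1 (Permutation_count_occ feq_dec _ _)) H z) as H'; clear H end);
  repeat (first [ rewrite count_occ_app in *
     | progress simpl count_occ in *
     | match goal with
   | |- context [feq_dec ?x ?y] => destruct (feq_dec x y)
   | H : context [feq_dec ?x ?y] |- _ => destruct (feq_dec x y)
  end]); first [lia | congruence] ].

Lemma perm_split : forall (x y : formula) l1 l2, Permutation (x::l1) (y::l2) ->
  (x = y /\ Permutation l1 l2) \/ exists l3, Permutation l1 (y::l3) /\ Permutation l2 (x::l3).
Proof.
  intros x y l1 l2 H. destruct (feq_dec x y) as [<-|Hne].
  - left. split; auto. eapply Permutation_cons_inv; eauto.
  - right. assert (Hi : In y l1).
    { assert (In y (x::l1)) by (apply Permutation_in with (y::l2); [symmetry; auto| left; auto]).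
      destruct H0; [congruence|auto]. }
    destruct (in_split _ _ Hi) as (la & lb & ->).
    exists (la ++ lb). split. perm.
    assert (Permutation (y::l2) (y :: x :: la ++ lb)) by perm.
    apply Permutation_cons_inv in H0. auto.
Qed.
Section S.
Variable s : system.

Inductive dh : nat -> list formula -> formula -> Prop :=
| h_ax : forall n G D p, Permutation D (Var p :: G) -> dh n D (Var p)
| h_top : forall n G, dh n G Top
| h_impr : forall n G a b, dh n (a :: G) b -> dh (S n) G (Imp a b)
| h_impl : forall n G D a b phi, Permutation D (Imp a b :: G) ->
    dh n (Imp a b :: G) a -> dh n (b :: G) phi -> dh (S n) D phi
| h_andr : forall n G a b, dh n G a -> dh n G b -> dh (S n) G (And a b)
| h_andl : forall n G D a b phi, Permutation D (And a b :: G) ->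
    dh n (a :: b :: G) phi -> dh (S n) D phi
| h_orr1 : forall n G a b, dh n G a -> dh (S n) G (Or a b)
| h_orr2 : forall n G a b, dh n G b -> dh (S n) G (Or a b)
| h_orl : forall n G D a b phi, Permutation D (Or a b :: G) ->
    dh n (a :: G) phi -> dh n (b :: G) phi -> dh (S n) D phi
| h_n : forall n G D a b, has_n s = true -> Permutation D (Neg a :: G) ->
    dh n (Neg a :: b :: G) a -> dh n (Neg a :: a :: G) b ->
    dh (S n) D (Neg b)
| h_nef : forall n G D a b, has_nef s = true -> Permutation D (Neg a :: G) ->
    dh n (Neg a :: G) a -> dh (S n) D (Neg b)
| h_copc : forall n G D a b, has_copc s = true -> Permutation D (Neg a :: G) ->
    dh n (Neg a :: b :: G) a -> dh (S n) D (Neg b)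
| h_an : forall n G a, has_an s = true ->
    dh n (a :: G) (Neg a) -> dh (S n) G (Neg a).

Lemma dh_mono : forall n G phi, dh n G phi -> forall m, n <= m -> dh m G phi.
Proof.
  induction 1; intros m Hm; try (destruct m as [|m]; [lia|]);
  try (econstructor; eauto; (apply IHdh || apply IHdh1 || apply IHdh2); lia).
  all: try (econstructor; eauto).
Qed.

Lemma deriv_dh : forall G phi, deriv s G phi -> exists n, dh n G phi.
Proof.
  induction 1;
  repeat match goal with H : exists _, _ |- _ => destruct H end;
  try (exists 0; econstructor; eauto; fail).
  all: try (exists (S x); econstructor; eauto; fail).
  all: exists (S (Nat.max x x0)); econstructor; eauto; eapply dh_mono; eauto; lia.
Qed.

Lemma dh_deriv : forall n G phi, dh n G phi -> deriv s G phi.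
Proof. induction 1.
  eapply d_ax; eauto. eapply d_top. eapply d_impr; eauto. eapply d_impl; eauto.
  eapply d_andr; eauto. eapply d_andl; eauto. eapply d_orr1; eauto. eapply d_orr2; eauto.
  eapply d_orl; eauto. eapply d_n; eauto. eapply d_nef; eauto. eapply d_copc; eauto. eapply d_an; eauto.
Qed.

Lemma dh_perm : forall n D phi, dh n D phi -> forall D', Permutation D D' -> dh n D' phi.
Proof.
  induction 1; intros D' HP.
  - apply h_ax with G. perm.
  - apply h_top.
  - eapply h_impr. apply IHdh. perm.
  - apply h_impl with G a b; [perm|assumption|assumption].
  - apply h_andr; auto.
  - apply h_andl with G a b; [perm|assumption].
  - apply h_orr1; auto.
  - apply h_orr2; auto.
  - apply h_orl with G a b; [perm|assumption|assumption].
  - apply h_n with G a; [assumption|perm|assumption|assumption].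
  - apply h_nef with G a; [assumption|perm|assumption].
  - apply h_copc with G a; [assumption|perm|assumption].
  - apply h_an; [assumption| apply IHdh; perm].
Qed.

Lemma dh_weak : forall n D phi, dh n D phi -> forall x, dh n (x :: D) phi.
Proof.
  induction 1; intros x.
  - apply h_ax with (x :: G). perm.
  - apply h_top.
  - apply h_impr. apply dh_perm with (x :: a :: G); [apply IHdh|perm].
  - apply h_impl with (x :: G) a b; [perm| |].
    + apply dh_perm with (x :: Imp a b :: G); [apply IHdh1|perm].
    + apply dh_perm with (x :: b :: G); [apply IHdh2|perm].
  - apply h_andr; auto.
  - apply h_andl with (x :: G) a b; [perm|].
    apply dh_perm with (x :: a :: b :: G); [apply IHdh|perm].
  - apply h_orr1; auto.
  - apply h_orr2; auto.
  - apply h_orl with (x :: G) a b; [perm| |].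
    + apply dh_perm with (x :: a :: G); [apply IHdh1|perm].
    + apply dh_perm with (x :: b :: G); [apply IHdh2|perm].
  - apply h_n with (x :: G) a; [assumption|perm| |].
    + apply dh_perm with (x :: Neg a :: b :: G); [apply IHdh1|perm].
    + apply dh_perm with (x :: Neg a :: a :: G); [apply IHdh2|perm].
  - apply h_nef with (x :: G) a; [assumption|perm|].
    apply dh_perm with (x :: Neg a :: G); [apply IHdh|perm].
  - apply h_copc with (x :: G) a; [assumption|perm|].
    apply dh_perm with (x :: Neg a :: b :: G); [apply IHdh|perm].
  - apply h_an; [assumption|].
    apply dh_perm with (x :: a :: G); [apply IHdh|perm].
Qed.

Lemma dh_weakl : forall L n D phi, dh n D phi -> dh n (L ++ D) phi.
Proof. induction L; simpl; intros; auto. apply dh_weak; auto. Qed.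

Lemma inv_gen : forall (X : formula) (L : list formula)
  (hXv : forall p, X <> Var p) (hXn : forall a, X <> Neg a)
  (hand : forall a b n G phi, X = And a b -> dh n (a :: b :: G) phi -> dh (S n) (L ++ G) phi)
  (hor : forall a b n G phi, X = Or a b -> dh n (a :: G) phi -> dh n (b :: G) phi -> dh (S n) (L ++ G) phi)
  (himp : forall a b n G phi, X = Imp a b -> dh n (b :: G) phi -> dh (S n) (L ++ G) phi),
  forall n D phi, dh n D phi -> forall G, Permutation D (X :: G) -> dh n (L ++ G) phi.
Proof.
  intros X L hXv hXn hand hor himp.
  induction 1; intros G0 HP.
  - assert (HP2 : Permutation (Var p :: G) (X :: G0)) by perm.
    apply perm_split in HP2 as [[E _]|(l3 & HL1 & HL2)]; [exfalso; apply (hXv p); auto|].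
    apply h_ax with (L ++ l3). perm.
  - apply h_top.
  - apply h_impr. apply dh_perm with (L ++ a :: G0); [apply IHdh; perm|perm].
  - assert (HP2 : Permutation (Imp a b :: G) (X :: G0)) by perm.
    apply perm_split in HP2 as [[E HE]|(l3 & HL1 & HL2)].
    + subst X. eapply himp; [reflexivity| apply dh_perm with (b::G); [assumption|perm]].
    + apply h_impl with (L ++ l3) a b; [perm| |].
      * apply dh_perm with (L ++ Imp a b :: l3); [apply IHdh1; perm|perm].
      * apply dh_perm with (L ++ b :: l3); [apply IHdh2; perm|perm].
  - apply h_andr; auto.
  - assert (HP2 : Permutation (And a b :: G) (X :: G0)) by perm.
    apply perm_split in HP2 as [[E HE]|(l3 & HL1 & HL2)].
    + subst X. eapply hand; [reflexivity| apply dh_perm with (a::b::G); [assumption|perm]].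
    + apply h_andl with (L ++ l3) a b; [perm| ].
      apply dh_perm with (L ++ a :: b :: l3); [apply IHdh; perm|perm].
  - apply h_orr1; auto.
  - apply h_orr2; auto.
  - assert (HP2 : Permutation (Or a b :: G) (X :: G0)) by perm.
    apply perm_split in HP2 as [[E HE]|(l3 & HL1 & HL2)].
    + subst X. eapply hor; [reflexivity| apply dh_perm with (a::G); [assumption|perm]| apply dh_perm with (b::G); [assumption|perm]].
    + apply h_orl with (L ++ l3) a b; [perm| |].
      * apply dh_perm with (L ++ a :: l3); [apply IHdh1; perm|perm].
      * apply dh_perm with (L ++ b :: l3); [apply IHdh2; perm|perm].
  - assert (HP2 : Permutation (Neg a :: G) (X :: G0)) by perm.
    apply perm_split in HP2 as [[E _]|(l3 & HL1 & HL2)]; [exfalso; apply (hXn a); auto|].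
    apply h_n with (L ++ l3) a; [assumption|perm| |].
    + apply dh_perm with (L ++ Neg a :: b :: l3); [apply IHdh1; perm|perm].
    + apply dh_perm with (L ++ Neg a :: a :: l3); [apply IHdh2; perm|perm].
  - assert (HP2 : Permutation (Neg a :: G) (X :: G0)) by perm.
    apply perm_split in HP2 as [[E _]|(l3 & HL1 & HL2)]; [exfalso; apply (hXn a); auto|].
    apply h_nef with (L ++ l3) a; [assumption|perm| ].
    apply dh_perm with (L ++ Neg a :: l3); [apply IHdh; perm|perm].
  - assert (HP2 : Permutation (Neg a :: G) (X :: G0)) by perm.
    apply perm_split in HP2 as [[E _]|(l3 & HL1 & HL2)]; [exfalso; apply (hXn a); auto|].
    apply h_copc with (L ++ l3) a; [assumption|perm| ].
    apply dh_perm with (L ++ Neg a :: b :: l3); [apply IHdh; perm|perm].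
  - apply h_an; [assumption|].
    apply dh_perm with (L ++ a :: G0); [apply IHdh; perm|perm].
Qed.

Lemma inv_and : forall n a b G phi, dh n (And a b :: G) phi -> dh n (a :: b :: G) phi.
Proof.
  intros. apply (inv_gen (And a b) [a; b]) with (n := n) (D := And a b :: G); auto; try discriminate.
  intros a' b' m G' phi' E H'. injection E; intros; subst. simpl. apply dh_mono with m; auto.
Qed.

Lemma inv_or1 : forall n a b G phi, dh n (Or a b :: G) phi -> dh n (a :: G) phi.
Proof.
  intros. apply (inv_gen (Or a b) [a]) with (n := n) (D := Or a b :: G); auto; try discriminate.
  intros a' b' m G' phi' E H1 H2. injection E; intros; subst. simpl. apply dh_mono with m; auto.
Qed.

Lemma inv_or2 : forall n a b G phi, dh n (Or a b :: G) phi -> dh n (b :: G) phi.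
Proof.
  intros. apply (inv_gen (Or a b) [b]) with (n := n) (D := Or a b :: G); auto; try discriminate.
  intros a' b' m G' phi' E H1 H2. injection E; intros; subst. simpl. apply dh_mono with m; auto.
Qed.

Lemma inv_imp : forall n a b G phi, dh n (Imp a b :: G) phi -> dh n (b :: G) phi.
Proof.
  intros. apply (inv_gen (Imp a b) [b]) with (n := n) (D := Imp a b :: G); auto; try discriminate.
  intros a' b' m G' phi' E H1. injection E; intros; subst. simpl. apply dh_mono with m; auto.
Qed.

Lemma d_perm : forall D phi, deriv s D phi -> forall D', Permutation D D' -> deriv s D' phi.
Proof. intros D phi H D' HP. destruct (deriv_dh _ _ H) as [n Hn]. eapply dh_deriv, dh_perm; eauto. Qed.

Lemma d_weak : forall D phi x, deriv s D phi -> deriv s (x :: D) phi.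
Proof. intros D phi x H. destruct (deriv_dh _ _ H) as [n Hn]. eapply dh_deriv, dh_weak; eauto. Qed.

Lemma d_weakl : forall L D phi, deriv s D phi -> deriv s (L ++ D) phi.
Proof. induction L; simpl; intros; auto. apply d_weak; auto. Qed.

Lemma d_inv_and : forall a b G phi, deriv s (And a b :: G) phi -> deriv s (a :: b :: G) phi.
Proof. intros. destruct (deriv_dh _ _ H) as [n Hn]. eapply dh_deriv, inv_and; eauto. Qed.
Lemma d_inv_or1 : forall a b G phi, deriv s (Or a b :: G) phi -> deriv s (a :: G) phi.
Proof. intros. destruct (deriv_dh _ _ H) as [n Hn]. eapply dh_deriv, inv_or1; eauto. Qed.
Lemma d_inv_or2 : forall a b G phi, deriv s (Or a b :: G) phi -> deriv s (b :: G) phi.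
Proof. intros. destruct (deriv_dh _ _ H) as [n Hn]. eapply dh_deriv, inv_or2; eauto. Qed.
Lemma d_inv_imp : forall a b G phi, deriv s (Imp a b :: G) phi -> deriv s (b :: G) phi.
Proof. intros. destruct (deriv_dh _ _ H) as [n Hn]. eapply dh_deriv, inv_imp; eauto. Qed.

Lemma d_id : forall a G, deriv s (a :: G) a.
Proof.
  induction a; intros G.
  - apply d_ax with G. perm.
  - apply d_top.
  - apply d_andl with G a1 a2; [perm|]. apply d_andr.
    + auto.
    + apply d_perm with (a2 :: a1 :: G); auto. perm.
  - apply d_orl with G a1 a2; [perm| |].
    + apply d_orr1; auto.
    + apply d_orr2; auto.
  - apply d_impr. apply d_impl with (a1 :: G) a1 a2; [perm| |].
    + apply d_perm with (a1 :: Imp a1 a2 :: G); auto. perm.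
    + auto.
  - destruct (has_n s) eqn:En.
    + apply d_n with G a; auto; apply d_perm with (a :: Neg a :: G); auto; perm.
    + assert (Ec : has_copc s = true) by (destruct s; simpl in *; congruence).
      apply d_copc with G a; auto; apply d_perm with (a :: Neg a :: G); auto; perm.
Qed.

Section CutRight.
Variable A : formula.
Variable Q : list formula -> Prop.
Hypothesis Qp : forall G G', Permutation G G' -> Q G -> Q G'.
Hypothesis Qw : forall G x, Q G -> Q (x :: G).
Hypothesis Qand : forall G a b, Q (And a b :: G) -> Q (a :: b :: G).
Hypothesis Qor1 : forall G a b, Q (Or a b :: G) -> Q (a :: G).
Hypothesis Qor2 : forall G a b, Q (Or a b :: G) -> Q (b :: G).
Hypothesis Qimp : forall G a b, Q (Imp a b :: G) -> Q (b :: G).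
Hypothesis Hax : forall G p, Q G -> A = Var p -> deriv s G (Var p).
Hypothesis Hand : forall G a b C, Q G -> A = And a b -> deriv s (a::b::G) C -> deriv s G C.
Hypothesis Hor : forall G a b C, Q G -> A = Or a b -> deriv s (a::G) C -> deriv s (b::G) C -> deriv s G C.
Hypothesis Himp : forall G a b C, Q G -> A = Imp a b -> deriv s G a -> deriv s (b::G) C -> deriv s G C.
Hypothesis Hn : forall G b c, has_n s = true -> Q G -> A = Neg b -> deriv s (c::G) b -> deriv s (b::G) c -> deriv s G (Neg c).
Hypothesis Hnef : forall G b c, has_nef s = true -> Q G -> A = Neg b -> deriv s G b -> deriv s G (Neg c).
Hypothesis Hcopc : forall G b c, has_copc s = true -> Q G -> A = Neg b -> deriv s (c::G) b -> deriv s G (Neg c).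

Lemma cut_right : forall D C, deriv s D C -> forall G0, Permutation D (A :: G0) -> Q G0 -> deriv s G0 C.
Proof.
  induction 1; intros G0 HP QG.
  - assert (HP2 : Permutation (Var p :: G) (A :: G0)) by perm.
    apply perm_split in HP2 as [[E _]|(l3 & HL1 & HL2)].
    + apply (Hax G0 p); auto.
    + apply d_ax with l3. perm.
  - apply d_top.
  - apply d_impr. apply IHderiv; [perm|auto].
  - assert (HP2 : Permutation (Imp a b :: G) (A :: G0)) by perm.
    apply perm_split in HP2 as [[E HE]|(l3 & HL1 & HL2)].
    + apply (Himp G0 a b); auto.
      * apply IHderiv1; [perm|auto].
      * apply d_perm with (b :: G); [auto|perm].
    + assert (Q1 : Q (Imp a b :: l3)) by (apply Qp with G0; auto).
      apply d_impl with l3 a b; [perm| |].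
      * apply IHderiv1; [perm|auto].
      * apply IHderiv2; [perm|eauto].
  - apply d_andr; auto.
  - assert (HP2 : Permutation (And a b :: G) (A :: G0)) by perm.
    apply perm_split in HP2 as [[E HE]|(l3 & HL1 & HL2)].
    + apply (Hand G0 a b); auto.
      apply d_perm with (a :: b :: G); [auto|perm].
    + assert (Q1 : Q (And a b :: l3)) by (apply Qp with G0; auto).
      apply d_andl with l3 a b; [perm| ].
      apply IHderiv; [perm|eauto].
  - apply d_orr1; auto.
  - apply d_orr2; auto.
  - assert (HP2 : Permutation (Or a b :: G) (A :: G0)) by perm.
    apply perm_split in HP2 as [[E HE]|(l3 & HL1 & HL2)].
    + apply (Hor G0 a b); auto.
      * apply d_perm with (a :: G); [auto|perm].
      * apply d_perm with (b :: G); [auto|perm].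
    + assert (Q1 : Q (Or a b :: l3)) by (apply Qp with G0; auto).
      apply d_orl with l3 a b; [perm| |].
      * apply IHderiv1; [perm|eauto].
      * apply IHderiv2; [perm|eauto].
  - assert (HP2 : Permutation (Neg a :: G) (A :: G0)) by perm.
    apply perm_split in HP2 as [[E HE]|(l3 & HL1 & HL2)].
    + apply (Hn G0 a); auto.
      * apply IHderiv1; [perm|auto].
      * apply IHderiv2; [perm|auto].
    + apply d_n with l3 a; [auto|perm| |].
      * apply IHderiv1; [perm|]. apply Qp with (b :: G0); [perm|auto].
      * apply IHderiv2; [perm|]. apply Qp with (a :: G0); [perm|auto].
  - assert (HP2 : Permutation (Neg a :: G) (A :: G0)) by perm.
    apply perm_split in HP2 as [[E HE]|(l3 & HL1 & HL2)].
    + apply (Hnef G0 a); auto.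
      apply IHderiv; [perm|auto].
    + apply d_nef with l3 a; [auto|perm| ].
      apply IHderiv; [perm|]. apply Qp with G0; [perm|auto].
  - assert (HP2 : Permutation (Neg a :: G) (A :: G0)) by perm.
    apply perm_split in HP2 as [[E HE]|(l3 & HL1 & HL2)].
    + apply (Hcopc G0 a); auto.
      apply IHderiv; [perm|auto].
    + apply d_copc with l3 a; [auto|perm| ].
      apply IHderiv; [perm|]. apply Qp with (b :: G0); [perm|auto].
  - apply d_an; auto. apply IHderiv; [perm|auto].
Qed.
End CutRight.

Definition stable (P : list formula -> Prop) :=
  (forall G G', Permutation G G' -> P G -> P G') /\ (forall G x, P G -> P (x :: G)) /\
  (forall G a b, P (And a b :: G) -> P (a :: b :: G)) /\
  (forall G a b, P (Or a b :: G) -> P (a :: G)) /\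
  (forall G a b, P (Or a b :: G) -> P (b :: G)) /\
  (forall G a b, P (Imp a b :: G) -> P (b :: G)).

Lemma stable_deriv : forall L x, stable (fun G => deriv s (L ++ G) x).
Proof.
  intros L x; repeat split; intros.
  - apply d_perm with (L ++ G); auto. perm.
  - apply d_perm with (x0 :: L ++ G); [apply d_weak; auto|perm].
  - apply d_perm with (a :: b :: L ++ G); [|perm]. apply d_inv_and. apply d_perm with (L ++ And a b :: G); auto; perm.
  - apply d_perm with (a :: L ++ G); [|perm]. apply d_inv_or1 with b. apply d_perm with (L ++ Or a b :: G); auto; perm.
  - apply d_perm with (b :: L ++ G); [|perm]. apply d_inv_or2 with a. apply d_perm with (L ++ Or a b :: G); auto; perm.
  - apply d_perm with (b :: L ++ G); [|perm]. apply d_inv_imp with a. apply d_perm with (L ++ Imp a b :: G); auto; perm.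
Qed.

Lemma stable_dh : forall n L x, stable (fun G => dh n (L ++ G) x).
Proof.
  intros n L x; repeat split; intros.
  - apply dh_perm with (L ++ G); auto. perm.
  - apply dh_perm with (x0 :: L ++ G); [apply dh_weak; auto|perm].
  - apply dh_perm with (a :: b :: L ++ G); [|perm]. apply inv_and. apply dh_perm with (L ++ And a b :: G); auto; perm.
  - apply dh_perm with (a :: L ++ G); [|perm]. apply inv_or1 with b. apply dh_perm with (L ++ Or a b :: G); auto; perm.
  - apply dh_perm with (b :: L ++ G); [|perm]. apply inv_or2 with a. apply dh_perm with (L ++ Or a b :: G); auto; perm.
  - apply dh_perm with (b :: L ++ G); [|perm]. apply inv_imp with a. apply dh_perm with (L ++ Imp a b :: G); auto; perm.
Qed.

Lemma stable_conj : forall P P', stable P -> stable P' -> stable (fun G => P G /\ P' G).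
Proof.
  intros P P' (h1&h2&h3&h4&h5&h6) (k1&k2&k3&k4&k5&k6); repeat split; intros;
  repeat match goal with H : _ /\ _ |- _ => destruct H end; eauto.
Qed.

Lemma stable_true : stable (fun _ => True).
Proof. repeat split. Qed.

Lemma stable_in : forall p, stable (fun G => In (Var p) G).
Proof.
  intros p; repeat split; intros; simpl in *; eauto using Permutation_in;
  repeat match goal with H : _ \/ _ |- _ => destruct H end; try discriminate; auto.
Qed.

Lemma stable_neg : forall a P, stable P ->
  stable (fun G => exists G2, Permutation G (Neg a :: G2) /\ P G2).
Proof.
  intros a P (h1&h2&h3&h4&h5&h6); repeat split; intros.
  - destruct H0 as (G2 & HP & HQ). exists G2; split; auto. perm.
  - destruct H as (G2 & HP & HQ). exists (x :: G2); split; auto. perm.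
  - destruct H as (G2 & HP & HQ).
    apply perm_split in HP as [[E _]|(l3 & HL1 & HL2)]; [discriminate|].
    exists (a0 :: b :: l3); split; [perm|]. apply h3. apply h1 with G2; auto.
  - destruct H as (G2 & HP & HQ).
    apply perm_split in HP as [[E _]|(l3 & HL1 & HL2)]; [discriminate|].
    exists (a0 :: l3); split; [perm|]. apply h4 with b. apply h1 with G2; auto.
  - destruct H as (G2 & HP & HQ).
    apply perm_split in HP as [[E _]|(l3 & HL1 & HL2)]; [discriminate|].
    exists (b :: l3); split; [perm|]. apply h5 with a0. apply h1 with G2; auto.
  - destruct H as (G2 & HP & HQ).
    apply perm_split in HP as [[E _]|(l3 & HL1 & HL2)]; [discriminate|].
    exists (b :: l3); split; [perm|]. apply h6 with a0. apply h1 with G2; auto.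
Qed.

Lemma cut_right' : forall A Q, stable Q ->
  (forall G p, Q G -> A = Var p -> deriv s G (Var p)) ->
  (forall G a b C, Q G -> A = And a b -> deriv s (a::b::G) C -> deriv s G C) ->
  (forall G a b C, Q G -> A = Or a b -> deriv s (a::G) C -> deriv s (b::G) C -> deriv s G C) ->
  (forall G a b C, Q G -> A = Imp a b -> deriv s G a -> deriv s (b::G) C -> deriv s G C) ->
  (forall G b c, has_n s = true -> Q G -> A = Neg b -> deriv s (c::G) b -> deriv s (b::G) c -> deriv s G (Neg c)) ->
  (forall G b c, has_nef s = true -> Q G -> A = Neg b -> deriv s G b -> deriv s G (Neg c)) ->
  (forall G b c, has_copc s = true -> Q G -> A = Neg b -> deriv s (c::G) b -> deriv s G (Neg c)) ->
  forall G C, Q G -> deriv s (A :: G) C -> deriv s G C.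
Proof.
  intros A Q (h1&h2&h3&h4&h5&h6) Hax Hand Hor Himp Hn Hnef Hcopc G C QG HC.
  eapply (cut_right A Q); eauto.
Qed.

Fixpoint fsize (f : formula) : nat :=
  match f with
  | Var _ | Top => 1
  | And a b | Or a b | Imp a b => S (fsize a + fsize b)
  | Neg a => S (fsize a)
  end.

Ltac nocomb := first [ discriminate | (destruct s; simpl in *; discriminate) ].

Lemma cut_gen : forall k A, fsize A < k -> forall G C, deriv s G A -> deriv s (A :: G) C -> deriv s G C.
Proof.
  induction k as [|k IHk]; intros A HA; [lia|].
  assert (cutS : forall B, fsize B < fsize A -> forall G C, deriv s G B -> deriv s (B :: G) C -> deriv s G C)
    by (intros; eapply IHk; eauto; lia).
  clear IHk.
  assert (inner : forall m n, n < m -> forall G X, dh n G X -> X = A -> forall C, deriv s (A :: G) C -> deriv s G C).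
  2:{ intros G C HG HC. destruct (deriv_dh _ _ HG) as [n Hn]. eapply (inner (S n) n); eauto. }
  induction m as [|m IHm]; intros n Hn G X HX EX C HC; [lia|].
  destruct HX.
  -
    subst A. apply (cut_right' (Var p) (fun G => In (Var p) G)); auto using stable_in;
      try (intros; discriminate).
    + intros G1 p' HI E. injection E; intros; subst. apply in_split in HI as (l1 & l2 & ->).
      apply d_ax with (l1 ++ l2). perm.
    + apply Permutation_in with (Var p :: G); [symmetry; auto| left; auto].
  - subst A. apply (cut_right' Top (fun _ => True)); auto using stable_true; intros; discriminate.
  -
    subst A. apply (cut_right' (Imp a b) (fun G => deriv s ([a] ++ G) b)); auto using stable_deriv;
      try (intros; discriminate).
    + intros G1 a' b' C' Q1 E Ha HC'. injection E; intros; subst.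
      assert (deriv s G1 b') by (eapply cutS with a'; [simpl; lia| eauto| eauto]).
      eapply cutS with b'; [simpl; lia| eauto| eauto].
    + simpl. eapply dh_deriv; eauto.
  -
    subst phi. apply d_impl with G a b; [auto| eapply dh_deriv; eauto|].
    eapply (IHm n); eauto; [lia|].
    apply d_perm with (b :: A :: G); [|perm]. apply d_inv_imp with a.
    apply d_perm with (A :: D); auto. perm.
  -
    subst A. apply (cut_right' (And a b) (fun G => deriv s ([] ++ G) a /\ deriv s ([] ++ G) b));
      auto using stable_conj, stable_deriv; try (intros; discriminate).
    + intros G1 a' b' C' [Q1 Q2] E HC'. injection E; intros; subst. simpl in *.
      eapply cutS with a'; [simpl; lia| auto |].
      eapply cutS with b'; [simpl; lia| apply d_weak; auto |].
      apply d_perm with (a' :: b' :: G1); auto. perm.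
    + simpl; split; eapply dh_deriv; eauto.
  -
    subst phi. apply d_andl with G a b; [auto|].
    eapply (IHm n); eauto; [lia|].
    apply d_perm with (a :: b :: A :: G); [|perm]. apply d_inv_and.
    apply d_perm with (A :: D); auto. perm.
  -
    subst A. apply (cut_right' (Or a b) (fun G => deriv s ([] ++ G) a)); auto using stable_deriv;
      try (intros; discriminate).
    + intros G1 a' b' C' Q1 E H1 H2. injection E; intros; subst. simpl in *.
      eapply cutS with a'; [simpl; lia| auto | auto].
    + simpl; eapply dh_deriv; eauto.
  -
    subst A. apply (cut_right' (Or a b) (fun G => deriv s ([] ++ G) b)); auto using stable_deriv;
      try (intros; discriminate).
    + intros G1 a' b' C' Q1 E H1 H2. injection E; intros; subst. simpl in *.
      eapply cutS with b'; [simpl; lia| auto | auto].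
    + simpl; eapply dh_deriv; eauto.
  -
    subst phi. apply d_orl with G a b; [auto| |].
    + eapply (IHm n); eauto; [lia|].
      apply d_perm with (a :: A :: G); [|perm]. apply d_inv_or1 with b.
      apply d_perm with (A :: D); auto. perm.
    + eapply (IHm n); eauto; [lia|].
      apply d_perm with (b :: A :: G); [|perm]. apply d_inv_or2 with a.
      apply d_perm with (A :: D); auto. perm.
  -
    subst A. rename H into hn.
    apply (cut_right' (Neg b) (fun G => exists G2, Permutation G (Neg a :: G2) /\
       (deriv s ([Neg a; b] ++ G2) a /\ deriv s ([Neg a; a] ++ G2) b)));
      auto using stable_neg, stable_conj, stable_deriv; try (intros; discriminate).
    + intros G1 b' c hn' (G2 & HP & Q1 & Q2) E H1 H2. injection E; intros; subst. simpl in *.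
      apply d_n with G2 a; auto.
      * apply d_perm with (c :: G1); [|perm].
        eapply cutS with b'; [simpl; lia| auto |].
        apply d_perm with (c :: Neg a :: b' :: G2); [apply d_weak; auto|perm].
      * apply d_perm with (a :: G1); [|perm].
        eapply cutS with b'; [simpl; lia| apply d_perm with (Neg a :: a :: G2); auto; perm |].
        apply d_perm with (a :: b' :: G1); [apply d_weak; auto|perm].
    + intros G1 b' c hnef (G2 & HP & Q1 & Q2) E H1. injection E; intros; subst. simpl in *.
      apply d_nef with G2 a; auto.
      apply d_perm with G1; [|perm].
      eapply cutS with b'; [simpl; lia| auto |].
      apply d_perm with (Neg a :: b' :: G2); auto; perm.
    + intros. nocomb.
    + exists G; split; [auto|]. simpl; split; eapply dh_deriv; eauto.
  -
    subst A. rename H into hnef.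
    apply (cut_right' (Neg b) (fun G => exists G2, Permutation G (Neg a :: G2) /\
       deriv s ([Neg a] ++ G2) a));
      auto using stable_neg, stable_deriv; try (intros; discriminate).
    + intros G1 b' c hn' (G2 & HP & Q1) E H1 H2. apply d_nef with G2 a; auto.
    + intros G1 b' c hn' (G2 & HP & Q1) E H1. apply d_nef with G2 a; auto.
    + intros G1 b' c hn' (G2 & HP & Q1) E H1. apply d_nef with G2 a; auto.
    + exists G; split; [auto|]. simpl; eapply dh_deriv; eauto.
  -
    subst A. rename H into hc.
    apply (cut_right' (Neg b) (fun G => exists G2, Permutation G (Neg a :: G2) /\
       deriv s ([Neg a; b] ++ G2) a));
      auto using stable_neg, stable_deriv; try (intros; discriminate).
    + intros. nocomb.
    + intros. nocomb.
    + intros G1 b' c hc' (G2 & HP & Q1) E H1. injection E; intros; subst. simpl in *.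
      apply d_copc with G2 a; auto.
      apply d_perm with (c :: G1); [|perm].
      eapply cutS with b'; [simpl; lia| auto |].
      apply d_perm with (c :: Neg a :: b' :: G2); [apply d_weak; auto|perm].
    + exists G; split; [auto|]. simpl; eapply dh_deriv; eauto.
  -
    subst A. rename H into han.
    apply (cut_right' (Neg a) (fun G => dh n ([a] ++ G) (Neg a)));
      auto using stable_dh; try (intros; discriminate).
    + intros. nocomb.
    + intros. nocomb.
    + intros G1 b' c hc' Q1 E H1. injection E; intros; subst. simpl in *.
      apply d_an; auto.
      assert (H2 : deriv s (b' :: G1) (Neg c)).
      { eapply (IHm n); eauto; [lia|].
        apply d_copc with (b' :: G1) b'; auto. apply d_perm with (b' :: Neg b' :: c :: G1); [apply d_id|perm]. }
      eapply cutS with b'; [simpl; lia| auto |].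
      apply d_perm with (c :: b' :: G1); [apply d_weak; auto|perm].
Qed.

Lemma cut : forall A G C, deriv s G A -> deriv s (A :: G) C -> deriv s G C.
Proof. intros. eapply (cut_gen (S (fsize A))); eauto. Qed.
End S.

Section Lat.
Variable A : algebra.
Hypothesis HA : is_rpc_lattice A.
Local Notation m := (ameet A).
Local Notation j := (ajoin A).
Local Notation i := (aimp A).
Local Notation t := (atop A).
Local Notation le := (ale A).

Lemma mC : forall x y, m x y = m y x. Proof. apply HA. Qed.
Lemma jC : forall x y, j x y = j y x. Proof. apply HA. Qed.
Lemma mA : forall x y z, m x (m y z) = m (m x y) z. Proof. apply HA. Qed.
Lemma jA : forall x y z, j x (j y z) = j (j x y) z. Proof. apply HA. Qed.
Lemma ab1 : forall x y, m x (j x y) = x. Proof. apply HA. Qed.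
Lemma ab2 : forall x y, j x (m x y) = x. Proof. apply HA. Qed.
Lemma le_top : forall x, le x t. Proof. apply HA. Qed.
Lemma res : forall a b c, le c (i a b) <-> le (m c a) b. Proof. apply HA. Qed.

Lemma m_idem : forall x, m x x = x.
Proof. intros x. rewrite <- (ab2 x x) at 2. apply ab1. Qed.
Lemma le_refl : forall x, le x x. Proof. intros; apply m_idem. Qed.
Lemma le_trans : forall x y z, le x y -> le y z -> le x z.
Proof. unfold ale; intros x y z H1 H2. rewrite <- H1, <- mA, H2; reflexivity. Qed.
Lemma le_antisym : forall x y, le x y -> le y x -> x = y.
Proof. unfold ale; intros x y H1 H2. rewrite <- H1, mC; exact H2. Qed.
Lemma lb1 : forall x y, le (m x y) x.
Proof. unfold ale; intros. rewrite (mC x y), <- mA, m_idem. auto. Qed.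
Lemma lb2 : forall x y, le (m x y) y.
Proof. unfold ale; intros. rewrite <- mA, m_idem. auto. Qed.
Lemma glb : forall x y z, le z x -> le z y -> le z (m x y).
Proof. unfold ale; intros x y z H1 H2. rewrite mA, H1, H2. auto. Qed.
Lemma le_j : forall x y, le x y <-> j x y = y.
Proof.
  unfold ale; split; intros H.
  - rewrite <- H, jC, mC. apply ab2.
  - rewrite <- H. apply ab1.
Qed.
Lemma ub1 : forall x y, le x (j x y). Proof. intros; apply ab1. Qed.
Lemma ub2 : forall x y, le y (j x y). Proof. intros; rewrite jC; apply ab1. Qed.
Lemma lub : forall x y z, le x z -> le y z -> le (j x y) z.
Proof. intros x y z H1 H2. apply le_j in H1, H2. apply le_j. rewrite <- jA, H2, H1. auto. Qed.
Lemma mp : forall a b, le (m (i a b) a) b.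
Proof. intros. apply res, le_refl. Qed.
Lemma m_top : forall x, m t x = x.
Proof. intros. rewrite mC. apply le_top. Qed.
Lemma imp_top : forall x y, i x y = t <-> le x y.
Proof.
  intros; split; intros H.
  - pose proof (le_refl t) as H0. rewrite <- H in H0 at 2. apply res in H0. rewrite m_top in H0. auto.
  - apply le_antisym; [apply le_top|]. apply res. rewrite m_top. auto.
Qed.
Lemma le_mono : forall a b c d, le a b -> le c d -> le (m a c) (m b d).
Proof. intros. apply glb; [apply le_trans with a | apply le_trans with c]; auto using lb1, lb2. Qed.

End Lat.

Section Sound.
Variable s : system.
Variable A : algebra.
Hypothesis HV : in_variety s A.
Variable v : nat -> A.

Lemma HR : is_rpc_lattice A.
Proof. destruct s; simpl in HV; unfold is_CC_lattice, is_CoPC_algebra, is_NeF_algebra, is_N_algebra in HV; tauto. Qed.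

Local Notation m := (ameet A).
Local Notation i := (aimp A).
Local Notation t := (atop A).
Local Notation le := (ale A).
Local Notation ev := (eval A v).

Fixpoint ctx (G : list formula) : A :=
  match G with [] => t | f :: G' => m (ev f) (ctx G') end.

Lemma ctx_perm : forall G G', Permutation G G' -> ctx G = ctx G'.
Proof.
  induction 1; simpl; auto.
  - rewrite IHPermutation; auto.
  - rewrite (mA _ HR), (mA _ HR), (mC _ HR (ev y)). auto.
  - congruence.
Qed.

Lemma ctx_bigAnd : forall G, ev (bigAnd G) = ctx G.
Proof.
  induction G as [|a G IH]; simpl; auto.
  destruct G as [|b G'].
  - simpl. rewrite (mC _ HR). symmetry. apply (m_top _ HR).
  - simpl in *. rewrite IH. auto.
Qed.

Lemma le_imp_r : forall c a b, le (m c a) b -> le c (i a b).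
Proof. intros. apply (res _ HR). auto. Qed.

Lemma soundness : forall G phi, deriv s G phi -> le (ctx G) (ev phi).
Proof.
  pose proof HR as R.
  induction 1; try (rewrite (ctx_perm _ _ H); simpl).
  - apply (lb1 _ R).
  - apply (le_top _ R).
  - apply (res _ R). simpl in IHderiv. rewrite (mC _ R). auto.
  - simpl in *.
    apply (le_trans _ R) with (m (ev b) (ctx G)); auto.
    apply (glb _ R); [|apply (lb2 _ R)].
    apply (le_trans _ R) with (m (i (ev a) (ev b)) (ev a)); [|apply (mp _ R)].
    apply (glb _ R); [apply (lb1 _ R)|auto].
  - simpl. apply (glb _ R); auto.
  - simpl in *. rewrite <- (mA _ R). auto.
  - simpl. apply (le_trans _ R) with (ev a); auto. apply (ub1 _ R).
  - simpl. apply (le_trans _ R) with (ev b); auto. apply (ub2 _ R).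
  - simpl in *. apply (res _ R). apply (lub _ R); apply (res _ R); auto.
  -
    rewrite (ctx_perm _ _ H0). simpl in *.
    assert (HN : is_N_algebra A) by (destruct s; simpl in *; try discriminate; unfold is_NeF_algebra in HV; tauto).
    destruct HN as [_ HN].
    set (c := m (aneg A (ev a)) (ctx G)) in *.
    assert (K1 : le c (i (ev b) (ev a))).
    { apply (res _ R). unfold c. rewrite <- (mA _ R), (mC _ R (ctx G)). auto. }
    assert (K2 : le c (i (ev a) (ev b))).
    { apply (res _ R). unfold c. rewrite <- (mA _ R), (mC _ R (ctx G)). auto. }
    assert (K3 : le c (aiff A (ev a) (ev b))) by (apply (glb _ R); auto).
    assert (K4 : le (aiff A (ev a) (ev b)) (aiff A (aneg A (ev a)) (aneg A (ev b)))) by (apply (imp_top _ R); auto).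
    apply (le_trans _ R) with (m (i (aneg A (ev a)) (aneg A (ev b))) (aneg A (ev a))); [|apply (mp _ R)].
    apply (glb _ R); [|apply (lb1 _ R)].
    apply (le_trans _ R) with (aiff A (aneg A (ev a)) (aneg A (ev b))); [|apply (lb1 _ R)].
    eapply (le_trans _ R); eauto.
  -
    rewrite (ctx_perm _ _ H0). simpl in *.
    assert (HN : is_NeF_algebra A) by (destruct s; simpl in *; try discriminate; auto).
    destruct HN as [_ HN].
    apply (le_trans _ R) with (m (ev a) (aneg A (ev a))); [|apply (imp_top _ R); auto].
    apply (glb _ R); auto. apply (lb1 _ R).
  -
    rewrite (ctx_perm _ _ H0). simpl in *.
    assert (HN : is_CoPC_algebra A) by (destruct s; simpl in *; try discriminate; unfold is_CC_lattice in HV; tauto).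
    destruct HN as [_ HN].
    set (c := m (aneg A (ev a)) (ctx G)) in *.
    assert (K1 : le c (i (ev b) (ev a))).
    { apply (res _ R). unfold c. rewrite <- (mA _ R), (mC _ R (ctx G)). auto. }
    apply (le_trans _ R) with (m (i (aneg A (ev a)) (aneg A (ev b))) (aneg A (ev a))); [|apply (mp _ R)].
    apply (glb _ R); [|apply (lb1 _ R)].
    eapply (le_trans _ R); [exact K1|]. apply (imp_top _ R); auto.
  -
    simpl in *.
    assert (HN : is_CC_lattice A) by (destruct s; simpl in *; try discriminate; auto).
    destruct HN as [_ HN].
    apply (le_trans _ R) with (i (ev a) (aneg A (ev a))); [|apply (imp_top _ R); auto].
    apply (res _ R). rewrite (mC _ R). auto.
Qed.

End Sound.

From Stdlib Require Import ProofIrrelevance FunctionalExtensionality PropExtensionality ClassicalEpsilon.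

Section Lind.
Variable s : system.

Definition ded (a b : formula) := deriv s [a] b.

Lemma in_der : forall a G, In a G -> deriv s G a.
Proof.
  intros a G H. apply in_split in H as (l1 & l2 & ->).
  apply d_perm with (a :: l1 ++ l2); [apply d_id|perm].
Qed.

Lemma lift : forall a b G, ded a b -> deriv s (a :: G) b.
Proof.
  intros. apply d_perm with (G ++ [a]); [apply d_weakl; auto|perm].
Qed.

Lemma mp_der : forall x y G C, In (Imp x y) G -> deriv s G x -> deriv s (y :: G) C -> deriv s G C.
Proof.
  intros x y G C HI Hx Hy. apply cut with y; auto.
  apply in_split in HI as (l1 & l2 & E).
  apply d_impl with (l1 ++ l2) x y; [subst; perm| |].
  - apply d_perm with G; auto. subst; perm.
  - apply d_id.
Qed.

Lemma andL : forall a b G C, deriv s (a :: b :: G) C -> deriv s (And a b :: G) C.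
Proof. intros. apply d_andl with G a b; auto. Qed.
Lemma orL : forall a b G C, deriv s (a :: G) C -> deriv s (b :: G) C -> deriv s (Or a b :: G) C.
Proof. intros. apply d_orl with G a b; auto. Qed.

Ltac inn := apply in_der; simpl; tauto.

Lemma ded_refl : forall a, ded a a. Proof. intros; apply d_id. Qed.
Lemma ded_trans : forall a b c, ded a b -> ded b c -> ded a c.
Proof. intros. apply cut with b; auto. apply lift; auto. Qed.

Definition eqv (f g : formula) : Prop := ded f g /\ ded g f.

Lemma eqv_sym : forall f g, eqv f g -> eqv g f. Proof. unfold eqv; tauto. Qed.
Lemma eqv_trans : forall f g h, eqv f g -> eqv g h -> eqv f h.
Proof. unfold eqv; intros f g h [] []; split; eapply ded_trans; eauto. Qed.
Lemma eqv_refl : forall f, eqv f f. Proof. split; apply ded_refl. Qed.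

Lemma cong_and : forall a b a' b', eqv a a' -> eqv b b' -> eqv (And a b) (And a' b').
Proof.
  intros a b a' b' [H1 H2] [H3 H4]; split; apply andL; apply d_andr;
  solve [apply lift; auto | apply d_perm with [b; a]; [apply lift; auto|perm]
        | apply d_perm with [b'; a']; [apply lift; auto|perm]].
Qed.

Lemma cong_or : forall a b a' b', eqv a a' -> eqv b b' -> eqv (Or a b) (Or a' b').
Proof.
  intros a b a' b' [H1 H2] [H3 H4]; split; apply orL;
  solve [apply d_orr1; apply lift; auto | apply d_orr2; apply lift; auto].
Qed.

Lemma cong_imp : forall a b a' b', eqv a a' -> eqv b b' -> eqv (Imp a b) (Imp a' b').
Proof.
  intros a b a' b' [H1 H2] [H3 H4]; split; apply d_impr.
  - apply mp_der with a b; [simpl; tauto| apply lift; auto| apply lift; auto].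
  - apply mp_der with a' b'; [simpl; tauto| apply lift; auto| apply lift; auto].
Qed.

Lemma neg_intro : forall a b G, deriv s (Neg a :: b :: G) a -> deriv s (Neg a :: a :: G) b ->
  deriv s (Neg a :: G) (Neg b).
Proof.
  intros. destruct (has_n s) eqn:En.
  - apply d_n with G a; auto.
  - assert (Ec : has_copc s = true) by (destruct s; simpl in *; congruence).
    apply d_copc with G a; auto.
Qed.

Lemma cong_neg : forall a a', eqv a a' -> eqv (Neg a) (Neg a').
Proof.
  intros a a' [H1 H2]; split; apply neg_intro.
  - apply d_perm with [a'; Neg a]; [apply lift; auto|perm].
  - apply d_perm with [a; Neg a]; [apply lift; auto|perm].
  - apply d_perm with [a; Neg a']; [apply lift; auto|perm].
  - apply d_perm with [a'; Neg a']; [apply lift; auto|perm].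
Qed.

Definition LT := { P : formula -> Prop | exists f, P = eqv f }.
Definition cl (f : formula) : LT := exist _ (eqv f) (ex_intro _ f eq_refl).
Definition rep (x : LT) : formula := proj1_sig (constructive_indefinite_description _ (proj2_sig x)).

Lemma cl_rep : forall x, cl (rep x) = x.
Proof.
  intros [P HP]. unfold rep, cl. simpl.
  destruct (constructive_indefinite_description _ HP) as [f Hf]. simpl. subst P.
  f_equal. apply proof_irrelevance.
Qed.

Lemma cl_eq : forall f g, eqv f g -> cl f = cl g.
Proof.
  intros f g H. unfold cl.
  assert (E : eqv f = eqv g).
  { apply functional_extensionality; intro h. apply propositional_extensionality.
    split; intro; eapply eqv_trans; eauto; apply eqv_sym; auto. }
  generalize (ex_intro (fun f0 => eqv f = eqv f0) f eq_refl).
  generalize (ex_intro (fun f0 => eqv g = eqv f0) g eq_refl).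
  rewrite E. intros. f_equal. apply proof_irrelevance.
Qed.

Lemma cl_inj : forall f g, cl f = cl g -> eqv f g.
Proof.
  intros f g H. apply (f_equal (@proj1_sig _ _)) in H. simpl in H.
  rewrite H. apply eqv_refl.
Qed.

Lemma rep_cl : forall f, eqv (rep (cl f)) f.
Proof. intros. apply cl_inj. apply cl_rep. Qed.

Definition Lalg : algebra := {|
  carrier := LT;
  ameet := fun x y => cl (And (rep x) (rep y));
  ajoin := fun x y => cl (Or (rep x) (rep y));
  aimp := fun x y => cl (Imp (rep x) (rep y));
  atop := cl Top;
  aneg := fun x => cl (Neg (rep x)) |}.

Lemma meet_cl : forall a b, ameet Lalg (cl a) (cl b) = cl (And a b).
Proof. intros; simpl; apply cl_eq, cong_and; apply rep_cl. Qed.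
Lemma join_cl : forall a b, ajoin Lalg (cl a) (cl b) = cl (Or a b).
Proof. intros; simpl; apply cl_eq, cong_or; apply rep_cl. Qed.
Lemma imp_cl : forall a b, aimp Lalg (cl a) (cl b) = cl (Imp a b).
Proof. intros; simpl; apply cl_eq, cong_imp; apply rep_cl. Qed.
Lemma neg_cl : forall a, aneg Lalg (cl a) = cl (Neg a).
Proof. intros; simpl; apply cl_eq, cong_neg; apply rep_cl. Qed.

Lemma eval_cl : forall f, eval Lalg (fun p => cl (Var p)) f = cl f.
Proof.
  induction f; simpl eval; auto.
  - rewrite IHf1, IHf2. apply meet_cl.
  - rewrite IHf1, IHf2. apply join_cl.
  - rewrite IHf1, IHf2. apply imp_cl.
  - rewrite IHf. apply neg_cl.
Qed.

End Lind.

Section Lind2.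
Variable s : system.
Local Notation L := (Lalg s).
Local Notation cl := (cl s).
Local Notation deriv := (deriv s).
Local Notation ded := (ded s).
Ltac inn := apply in_der; simpl; tauto.

Lemma surj : forall x : L, exists f, x = cl f.
Proof. intros x. exists (rep s x). symmetry. apply cl_rep. Qed.

Ltac reps := repeat match goal with x : carrier L |- _ =>
  let f := fresh "f" in destruct (surj x) as [f ->] end;
  repeat first [rewrite meet_cl | rewrite join_cl | rewrite imp_cl | rewrite neg_cl].

Lemma ale_cl : forall a b, ale L (cl a) (cl b) <-> ded a b.
Proof.
  intros a b. unfold ale. rewrite meet_cl. split; intro H.
  - apply cl_inj in H as [H1 H2]. apply ded_trans with (And a b); auto.
    apply andL. apply d_perm with [b; a]; [apply d_id|perm].
  - apply cl_eq. split.
    + apply andL. inn.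
    + apply d_andr; [inn| exact H].
Qed.

Lemma top_cl : forall X, deriv [] X -> cl X = atop L.
Proof.
  intros X H. simpl. apply cl_eq. split.
  - apply d_top.
  - apply d_weak; auto.
Qed.

Lemma L_rpc : is_rpc_lattice L.
Proof.
  repeat split; intros; reps; try (match goal with |- ale _ _ _ => fail 1 | _ => apply cl_eq end).
  - split; apply andL; apply d_andr; inn.
  - split; apply orL; solve [apply d_orr1; inn | apply d_orr2; inn].
  - split.
    + apply andL. apply d_perm with [And f0 f; f1]; [|perm]. apply andL.
      apply d_andr; [apply d_andr|]; inn.
    + apply andL. apply andL. apply d_andr; [|apply d_andr]; inn.
  - split.
    + apply orL; [apply d_orr1; apply d_orr1; inn|].
      apply orL; [apply d_orr1; apply d_orr2; inn| apply d_orr2; inn].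
    + apply orL; [|apply d_orr2; apply d_orr2; inn].
      apply orL; [apply d_orr1; inn| apply d_orr2; apply d_orr1; inn].
  - split; [apply andL; inn| apply d_andr; [inn| apply d_orr1; inn]].
  - split; [apply orL; [inn| apply andL; inn] | apply d_orr1; inn].
  - change (atop L) with (cl Top). apply ale_cl. apply d_top.
  - rewrite imp_cl in H. apply ale_cl. apply ale_cl in H. apply andL.
    apply cut with (Imp f1 f0); [apply lift; auto|].
    apply mp_der with f1 f0; [simpl; tauto| inn| inn].
  - rewrite meet_cl in H. apply ale_cl. apply ale_cl in H. apply d_impr.
    apply cut with (And f f1); [apply d_andr; inn|].
    apply lift; auto.
Qed.

Lemma aiff_cl : forall a b, aiff L (cl a) (cl b) = cl (Iff a b).
Proof. intros. unfold aiff, Iff. rewrite !imp_cl, meet_cl. auto. Qed.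

Lemma neg_cong_der : forall a b, deriv [Imp a b; Imp b a; Neg a] (Neg b).
Proof.
  intros. apply d_perm with [Neg a; Imp a b; Imp b a]; [|perm]. apply neg_intro.
  - apply mp_der with b a; [simpl; tauto| inn| inn].
  - apply mp_der with a b; [simpl; tauto| inn| inn].
Qed.

Lemma L_N : is_N_algebra L.
Proof.
  split; [apply L_rpc|]. intros p q; destruct (surj p) as [a ->]; destruct (surj q) as [b ->]; reps. rewrite !aiff_cl, imp_cl.
  apply top_cl. apply d_impr. apply andL. apply d_andr; apply d_impr.
  - apply d_perm with [Imp a b; Imp b a; Neg a]; [apply neg_cong_der|perm].
  - apply d_perm with [Imp b a; Imp a b; Neg b]; [apply neg_cong_der|perm].
Qed.

Lemma L_NeF : has_nef s = true -> is_NeF_algebra L.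
Proof.
  intros hn. split; [apply L_N|]. intros p q; destruct (surj p) as [a ->]; destruct (surj q) as [b ->]; reps.
  apply top_cl. apply d_impr. apply andL. apply d_perm with [Neg a; a]; [|perm].
  apply d_nef with [a] a; auto. inn.
Qed.

Lemma L_CoPC : has_copc s = true -> is_CoPC_algebra L.
Proof.
  intros hc. split; [apply L_N|]. intros p q; destruct (surj p) as [a ->]; destruct (surj q) as [b ->]; reps.
  apply top_cl. apply d_impr. apply d_impr.
  apply d_copc with [Imp a b] b; auto.
  apply mp_der with a b; [simpl; tauto| inn| inn].
Qed.

Lemma L_CC : has_copc s = true -> has_an s = true -> is_CC_lattice L.
Proof.
  intros hc ha. split; [apply L_CoPC; auto|]. intros p; destruct (surj p) as [a ->]; reps.
  apply top_cl. apply d_impr. apply d_an; auto.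
  apply mp_der with a (Neg a); [simpl; tauto| inn| inn].
Qed.

End Lind2.

Lemma L_variety : forall s, in_variety s (Lalg s).
Proof.
  destruct s; simpl.
  - apply L_N.
  - apply L_NeF; auto.
  - apply L_CoPC; auto.
  - apply L_CC; auto.
Qed.

Lemma bigAnd_der : forall s G, deriv s G (bigAnd G).
Proof.
  intros s G. induction G as [|a G IH].
  - apply d_top.
  - destruct G as [|b G'].
    + apply d_id.
    + change (deriv s (a :: b :: G') (And a (bigAnd (b :: G')))).
      apply d_andr; [apply d_id| apply d_weak; auto].
Qed.

Theorem theorem3p3 : forall (s : system) (G : list formula) (phi : formula),
  deriv s G phi <-> valid_eq1 s (Imp (bigAnd G) phi).
Proof.
  intros s G phi; split.
  - intros H A HV v. simpl eval. rewrite (ctx_bigAnd s A HV v).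
    apply (imp_top _ (HR s A HV)). apply (soundness s A HV v); auto.
  - intros H. specialize (H (Lalg s) (L_variety s) (fun p => cl s (Var p))).
    rewrite eval_cl in H. change (atop (Lalg s)) with (cl s Top) in H.
    apply cl_inj in H as [_ H].
    assert (H0 : deriv s [] (Imp (bigAnd G) phi)) by (apply (cut s Top); [apply d_top| exact H]).
    apply (cut s (bigAnd G)); [apply bigAnd_der|].
    apply (cut s (Imp (bigAnd G) phi)).
    + pose proof (d_weakl s (bigAnd G :: G) _ _ H0) as H1. rewrite app_nil_r in H1. exact H1.
    + apply (mp_der s (bigAnd G) phi); [left; auto| apply in_der; simpl; tauto| apply d_id].
Qed.
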